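(* For any weight $\omega\in\mathbb{R}^J$ whose regular subdivision satisfies $\mathscr{T}_\omega=\mathscr{T}_{\max}$ (for instance any $\omega$ whose image in $L_{\mathrm{ext}}^\vee\otimes\mathbb{R}\cong H^2(X,\mathbb{R})$ is ample), the set $$\{\,y^{\ell_{\mathrm{ext}}^+(\mathcal{P})}-y^{\ell_{\mathrm{ext}}^-(\mathcal{P})}:\ \mathcal{P}\text{ a primitive collection of }\Sigma\,\}$$ is a minimal Gröbner basis of the toric ideal $I_\mathcal{A}$ with respect to $\omega$. Consequently the box operators of $\mathcal{M}(A_{\mathrm{ext}},\beta)$ are generated by the box operators $\partial^{\ell_{\mathrm{ext}}^+(\mathcal{P})}-\partial^{\ell_{\mathrm{ext}}^-(\mathcal{P})}$, $\mathcal{P}$ running over the primitive collections of $\Sigma$.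
   Context: $N\cong\mathbb{Z}^n$, $M$ dual. $X$ smooth projective toric with fan $\Sigma$ and nef-partition $\Sigma(1)=I_1\sqcup\cdots\sqcup I_r$ (each $E_i=\sum_{\rho\in I_i}D_\rho$ nef), $I_i=\{\rho_{i,1},\dots,\rho_{i,n_i}\}$, $J=\{(i,j):1\le i\le r,0\le j\le n_i\}$, $\nu_{i,j}=(\rho_{i,j},e_i)$ ($j\ge1$), $\nu_{i,0}=(0,e_i)$ in $N\times\mathbb{Z}^r$, $\mathcal{A}=\{\nu_{i,j}\}$. $A_{\mathrm{ext}}:\mathbb{Z}^J\to N\times\mathbb{Z}^r$, $e_{i,j}\mapsto\nu_{i,j}$, $L_{\mathrm{ext}}=\ker A_{\mathrm{ext}}\cong L=\ker(\mathbb{Z}^{\{(i,j):j\ge1\}}\to N)$. Toric ideal $I_\mathcal{A}=\langle y^{\ell^+}-y^{\ell^-}:\ell\in L_{\mathrm{ext}}\rangle\subset\mathbb{C}[y_{i,j}:(i,j)\in J]$, where $\ell=\ell^+-\ell^-$ with $\ell^\pm\ge0$ of disjoint supports; a weight $\omega\in\mathbb{R}^J$ defines leading terms by maximal $\omega$-weight, $\mathrm{wt}(y^m)=\sum\omega_{i,j}m_{i,j}$. The regular subdivision $\mathscr{T}_\omega$ of $\mathcal{A}$ is obtained by projecting the lower faces of the cone generated by $(\nu,\omega_\nu)$, $\nu\in\mathcal{A}$. $\mathscr{T}_{\max}$ is the triangulation whose maximal simplices (cones) have vertex sets $\{\nu_{1,0},\dots,\nu_{r,0}\}\cup\{\nu_{i,j}:\rho_{i,j}\in\sigma(1)\}$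 for $\sigma$ a maximal cone of $\Sigma$ (the fan of the total space of $\oplus_i\mathcal{O}_X(E_i)$). A primitive collection is $\mathcal{P}\subset\Sigma(1)$ not spanning a cone but with every proper subset spanning one; its primitive relation $\ell(\mathcal{P})\in L$ is the coefficient vector of $\sum_{\mathcal{P}}\rho_{i,j}-\sum_{\sigma(1)}c_{i,j}\rho_{i,j}=0$ where $\sigma$ is the cone containing $\sum_\mathcal{P}\rho_{i,j}$ in its relative interior and $c_{i,j}\in\mathbb{Z}_{>0}$; $\ell_{\mathrm{ext}}(\mathcal{P})\in L_{\mathrm{ext}}$ is its image under $L\cong L_{\mathrm{ext}}$. The GKZ system $\mathcal{M}(A_{\mathrm{ext}},\beta)$ is the Weyl algebra module on variables $x_{i,j}$ generated by box operators $\partial^{\ell^+}-\partial^{\ell^-}$ ($\ell\in L_{\mathrm{ext}}$) and Euler operators $\sum_{(i,j)}(\nu_{i,j})_kx_{i,j}\partial_{i,j}-\beta_k$. *)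

(* Defs.v *)
From HB Require Import structures.
From mathcomp Require Import all_boot all_order all_algebra.
From mathcomp Require Import mpoly.

Set Implicit Arguments.
Unset Strict Implicit.
Unset Printing Implicit Defensive.

Import Order.TTheory GRing.Theory Num.Theory.
Local Open Scope ring_scope.

(*  N = Z^n, vectors are functions 'I_n -> int.                          *)
(*  Sigma(1) = 'I_d : ray p has primitive generator ray p : 'I_n -> int. *)
(*  The fan Sigma is simplicial (smooth), so a cone is determined by its *)
(*  set of rays : Sigma : {set {set 'I_d}}.                              *)
(*  The nef partition is part : 'I_d -> 'I_r  (I_i = part^-1 i).          *)
(*  J = 'I_(d + r) : lshift r p  <-> nu_{p} = (ray p, e_{part p})        *)
(*                   rshift d i  <-> nu_{i,0} = (0, e_i).                *)
(*  N x Z^r = Z^(n+r), vectors 'I_(n+r) -> int.                          *)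

Definition pairing n (m v : 'I_n -> int) : int := \sum_(k < n) m k * v k.

Definition in_cone (R : realFieldType) n d (ray : 'I_d -> 'I_n -> int)
    (s : {set 'I_d}) (x : 'I_n -> R) : Prop :=
  exists a : 'I_d -> R,
    (forall p, 0 <= a p) /\ (forall p, p \notin s -> a p = 0) /\
    (forall k, x k = \sum_(p < d) a p * (ray p k)%:~R).

Definition max_cone d (Sigma : {set {set 'I_d}}) (s : {set 'I_d}) : Prop :=
  s \in Sigma /\ forall t : {set 'I_d}, t \in Sigma -> s \subset t -> t = s.

Definition smooth_projective_fan (R : realFieldType) n d
    (ray : 'I_d -> 'I_n -> int) (Sigma : {set {set 'I_d}}) : Prop :=
  (forall p, [set p] \in Sigma) /\
  (forall s t : {set 'I_d}, s \in Sigma -> t \subset s -> t \in Sigma) /\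
  (* two cones intersect in a common face *)
  (forall s t : {set 'I_d}, s \in Sigma -> t \in Sigma -> forall x : 'I_n -> R,
      in_cone ray s x -> in_cone ray t x -> in_cone ray (s :&: t) x) /\
  (* smoothness: the rays of each cone are part of a Z-basis of N *)
  (forall s, s \in Sigma ->
     (forall a : 'I_d -> R, (forall p, p \notin s -> a p = 0) ->
        (forall k, \sum_(p < d) a p * (ray p k)%:~R = 0) -> forall p, a p = 0) /\
     (forall a : 'I_d -> R, (forall p, p \notin s -> a p = 0) ->
        (forall k, exists z : int, \sum_(p < d) a p * (ray p k)%:~R = z%:~R) ->
        forall p, exists z : int, a p = z%:~R)) /\
  (forall x : 'I_n -> R, exists2 s, s \in Sigma & in_cone ray s x) /\
  (* projectivity: some divisor sum_p a_p D_p has strictly convex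
     support function *)
  (exists a : 'I_d -> int, forall s, max_cone Sigma s ->
     exists m : 'I_n -> int, forall p,
       (p \in s -> pairing m (ray p) = - a p) /\
       (p \notin s -> - a p < pairing m (ray p))).

(* the divisor E_i = sum_{p in I_i} D_p is nef (convex support function) *)
Definition nef_part n d r (ray : 'I_d -> 'I_n -> int)
    (Sigma : {set {set 'I_d}}) (part : 'I_d -> 'I_r) (i : 'I_r) : Prop :=
  forall s, max_cone Sigma s ->
    exists m : 'I_n -> int, forall p,
      (p \in s -> pairing m (ray p) = - (part p == i)%:Z) /\
      (p \notin s -> - (part p == i)%:Z <= pairing m (ray p)).

Definition nef_partition n d r (ray : 'I_d -> 'I_n -> int)
    (Sigma : {set {set 'I_d}}) (part : 'I_d -> 'I_r) : Prop :=
  forall i : 'I_r, (exists p, part p = i) /\ nef_part ray Sigma part i.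

Definition nu n d r (ray : 'I_d -> 'I_n -> int) (part : 'I_d -> 'I_r)
    (j : 'I_(d + r)) (k : 'I_(n + r)) : int :=
  match split j with
  | inl p => match split k with
             | inl k1 => ray p k1
             | inr k2 => (part p == k2)%:Z
             end
  | inr i => match split k with
             | inl _ => 0
             | inr k2 => (i == k2)%:Z
             end
  end.

Definition Lext n d r (ray : 'I_d -> 'I_n -> int) (part : 'I_d -> 'I_r)
    (l : 'I_(d + r) -> int) : Prop :=
  forall k, \sum_(j < d + r) l j * nu ray part j k = 0.

Definition ext d r (part : 'I_d -> 'I_r) (l : 'I_d -> int) (j : 'I_(d + r)) : int :=
  match split j with
  | inl p => l p
  | inr i => - \sum_(p < d | part p == i) l p
  end.

(* cells of the regular subdivision T_omega : index sets of the points on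
   a lower face of the cone spanned by the (nu_j, omega_j) *)
Definition reg_cell (R : realFieldType) n d r (ray : 'I_d -> 'I_n -> int)
    (part : 'I_d -> 'I_r) (w : 'I_(d + r) -> R) (C : {set 'I_(d + r)}) : Prop :=
  exists psi : 'I_(n + r) -> R,
    (forall j, \sum_(k < n + r) psi k * (nu ray part j k)%:~R <= w j) /\
    (forall j, j \in C <-> \sum_(k < n + r) psi k * (nu ray part j k)%:~R = w j).

Definition reg_max_cell (R : realFieldType) n d r (ray : 'I_d -> 'I_n -> int)
    (part : 'I_d -> 'I_r) (w : 'I_(d + r) -> R) (C : {set 'I_(d + r)}) : Prop :=
  reg_cell ray part w C /\
  forall C', reg_cell ray part w C' -> C \subset C' -> C' = C.

Definition Tmax_cell d r (s : {set 'I_d}) : {set 'I_(d + r)} :=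
  [set j : 'I_(d + r) | match split j with inl p => p \in s | inr _ => true end].

Definition Tw_eq_Tmax (R : realFieldType) n d r (ray : 'I_d -> 'I_n -> int)
    (Sigma : {set {set 'I_d}}) (part : 'I_d -> 'I_r) (w : 'I_(d + r) -> R) : Prop :=
  forall C : {set 'I_(d + r)},
    reg_max_cell ray part w C <-> exists2 s, max_cone Sigma s & C = Tmax_cell r s.

Definition prim_coll d (Sigma : {set {set 'I_d}}) (P : {set 'I_d}) : Prop :=
  P \notin Sigma /\ forall Q : {set 'I_d}, Q \proper P -> Q \in Sigma.

Definition prim_rel n d (ray : 'I_d -> 'I_n -> int) (Sigma : {set {set 'I_d}})
    (P : {set 'I_d}) (l : 'I_d -> int) : Prop :=
  exists2 s, s \in Sigma &
  exists c : 'I_d -> int,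
    (forall p, p \in s -> 0 < c p) /\
    (forall k, \sum_(p in P) ray p k = \sum_(p in s) c p * ray p k) /\
    (forall p, l p = (p \in P)%:Z - (if p \in s then c p else 0)).

Definition posp (z : int) : nat := if 0 <= z then absz z else 0%N.
Definition negp (z : int) : nat := posp (- z).

Definition mpos k (l : 'I_k -> int) : 'X_{1..k} := [multinom posp (l i) | i < k].
Definition mneg k (l : 'I_k -> int) : 'X_{1..k} := [multinom negp (l i) | i < k].

Definition binom (F : fieldType) k (l : 'I_k -> int) : {mpoly F[k]} :=
  'X_[mpos l] - 'X_[mneg l].

Definition in_ideal (F : fieldType) k (S : {mpoly F[k]} -> Prop) (f : {mpoly F[k]}) : Prop :=
  exists s : seq ({mpoly F[k]} * {mpoly F[k]}),
    (forall x, x \in s -> S x.2) /\ f = \sum_(x <- s) x.1 * x.2.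

Definition toric_ideal (F : fieldType) n d r (ray : 'I_d -> 'I_n -> int)
    (part : 'I_d -> 'I_r) (f : {mpoly F[d + r]}) : Prop :=
  in_ideal (fun g => exists l, Lext ray part l /\ g = binom F l) f.

Definition mweight (R : realFieldType) k (w : 'I_k -> R) (m : 'X_{1..k}) : R :=
  \sum_(j < k) w j * (m j)%:R.

Definition init_form (R : realFieldType) (F : fieldType) k (w : 'I_k -> R)
    (f : {mpoly F[k]}) : {mpoly F[k]} :=
  \sum_(m <- msupp f | all (fun m' => mweight w m' <= mweight w m) (msupp f))
     f@_m *: 'X_[m].

Definition groebner (R : realFieldType) (F : fieldType) k (w : 'I_k -> R)
    (I G : {mpoly F[k]} -> Prop) : Prop :=
  (forall g, G g -> I g) /\
  (forall f, in_ideal (fun q => exists2 h, I h & q = init_form w h) f <->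
             in_ideal (fun q => exists2 g, G g & q = init_form w g) f).

Definition minimal_groebner (R : realFieldType) (F : fieldType) k (w : 'I_k -> R)
    (I G : {mpoly F[k]} -> Prop) : Prop :=
  groebner w I G /\
  (forall g, G g ->
     ~ in_ideal (fun q => exists h, [/\ G h, h <> g & q = init_form w h])
                (init_form w g)).

Definition prim_binomials (F : fieldType) n d r (ray : 'I_d -> 'I_n -> int)
    (Sigma : {set {set 'I_d}}) (part : 'I_d -> 'I_r) (g : {mpoly F[d + r]}) : Prop :=
  exists P l, [/\ prim_coll Sigma P, prim_rel ray Sigma P l & g = binom F (ext part l)].

Arguments toric_ideal F {n d r} ray part f.
Arguments prim_binomials F {n d r} ray Sigma part g.
Arguments binom F {k} l.
Arguments smooth_projective_fan R {n d} ray Sigma.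

(* Main.v *)
Require Import Defs.
From HB Require Import structures.
From mathcomp Require Import all_boot all_order all_algebra.
From mathcomp Require Import mpoly.
From mathcomp Require Import ring lra zify.
From Stdlib Require Import Classical.
Set Implicit Arguments.
Unset Strict Implicit.
Unset Printing Implicit Defensive.
Import Order.TTheory GRing.Theory Num.Theory.
Local Open Scope ring_scope.

Lemma splitl m n (p : 'I_m) : split (lshift n p) = inl p.
Proof. exact: (unsplitK (inl p)). Qed.
Lemma splitr m n (p : 'I_n) : split (rshift m p) = inr p.
Proof. exact: (unsplitK (inr p)). Qed.

Lemma natz_sum (I : Type) (s : seq I) (P : pred I) (f : I -> nat) :
  ((\sum_(i <- s | P i) f i)%N)%:Z = \sum_(i <- s | P i) (f i)%:Z.
Proof. by apply: (big_morph _ PoszD). Qed.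

Lemma intr_sumE (R : pzRingType) (I : Type) (s : seq I) (P : pred I) (f : I -> int) :
  (\sum_(i <- s | P i) f i)%:~R = \sum_(i <- s | P i) (f i)%:~R :> R.
Proof. by apply: (big_morph _ (@intrD R)); rewrite mulr0z. Qed.

Section Ideal.
Variables (F : fieldType) (k : nat).
Implicit Types (S : {mpoly F[k]} -> Prop) (f g q : {mpoly F[k]}).

Lemma ideal0 S : in_ideal S 0.
Proof. by exists [::]; split => //; rewrite big_nil. Qed.

Lemma idealD S f g : in_ideal S f -> in_ideal S g -> in_ideal S (f + g).
Proof.
move=> [s1 [H1 ->]] [s2 [H2 ->]]; exists (s1 ++ s2); split; last by rewrite big_cat.
by move=> x; rewrite mem_cat => /orP[/H1|/H2].
Qed.

Lemma idealM S q f : in_ideal S f -> in_ideal S (q * f).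
Proof.
move=> [s [H ->]]; exists [seq (q * x.1, x.2) | x <- s]; split.
  by move=> x /mapP [y ys ->]; exact: H ys.
rewrite big_map mulr_sumr; apply: eq_bigr => x _; by rewrite mulrA.
Qed.

Lemma idealgen S g : S g -> in_ideal S g.
Proof.
move=> Sg; exists [:: (1, g)]; split; last by rewrite big_seq1 mul1r.
by move=> x; rewrite inE => /eqP ->.
Qed.

Lemma idealZ S c f : in_ideal S f -> in_ideal S (c *: f).
Proof. by move=> H; rewrite -mul_mpolyC; apply: idealM. Qed.

Lemma idealN S f : in_ideal S f -> in_ideal S (- f).
Proof. by move=> H; rewrite -scaleN1r; apply: idealZ. Qed.

Lemma idealB S f g : in_ideal S f -> in_ideal S g -> in_ideal S (f - g).
Proof. by move=> Hf Hg; apply: idealD => //; apply: idealN. Qed.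

Lemma ideal_sum S (I : Type) (s : seq I) (P : pred I) (G : I -> {mpoly F[k]}) :
  (forall i, P i -> in_ideal S (G i)) -> in_ideal S (\sum_(i <- s | P i) G i).
Proof.
move=> H; elim: s => [|x s IH]; first by rewrite big_nil; apply: ideal0.
rewrite big_cons; case: ifP => Px //; by apply: idealD => //; apply: H.
Qed.

Lemma idealT S1 S2 f : in_ideal S1 f -> (forall g, S1 g -> in_ideal S2 g) -> in_ideal S2 f.
Proof.
move=> [s [H ->]] H12; rewrite big_seq; apply: ideal_sum => x xs; apply: idealM; exact: H12 _ (H _ xs).
Qed.

Lemma idealS S1 S2 f : in_ideal S1 f -> (forall g, S1 g -> S2 g) -> in_ideal S2 f.
Proof. by move=> H H12; apply: (idealT H) => g /H12; apply: idealgen. Qed.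

Variable (R : realFieldType) (w : 'I_k -> R).

Lemma init_single f (m0 : 'X_{1..k}) : m0 \in msupp f ->
  (forall m, m \in msupp f -> m != m0 -> Defs.mweight w m < Defs.mweight w m0) ->
  init_form w f = f@_m0 *: 'X_[m0].
Proof.
move=> Hm0 Hlt; rewrite /init_form big_mkcond (bigD1_seq m0) ?msupp_uniq //=.
have -> : all (fun m' => Defs.mweight w m' <= Defs.mweight w m0) (msupp f).
  apply/allP => m' Hm'; case: (eqVneq m' m0) => [->//|ne].
  exact: ltW (Hlt _ Hm' ne).
rewrite big1_seq ?addr0 // => m /andP[ne Hm]; case: ifP => // /allP /(_ _ Hm0).
by rewrite leNgt Hlt.
Qed.

Lemma binom_init (l : 'I_k -> int) :
  Defs.mweight w (mneg l) < Defs.mweight w (mpos l) -> init_form w (binom F l) = 'X_[mpos l].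
Proof.
move=> Hlt; have ne : mpos l != mneg l by apply: contraTneq Hlt => ->; rewrite ltxx.
have ne' : mneg l != mpos l by rewrite eq_sym.
rewrite (@init_single _ (mpos l)).
- by rewrite /binom mcoeffB !mcoeffX eqxx (negbTE ne') subr0 scale1r.
- by rewrite mcoeff_msupp /binom mcoeffB !mcoeffX eqxx (negbTE ne') subr0 oner_neq0.
move=> m; rewrite mcoeff_msupp /binom mcoeffB !mcoeffX => Hm nm.
rewrite eq_sym in nm; rewrite (negbTE nm) sub0r in Hm.
case: (eqVneq (mneg l) m) Hm => [<- _|_]; first by [].
by rewrite mulr0n oppr0 eqxx.
Qed.

End Ideal.

Section Main.
Variables (R : realFieldType) (F : fieldType) (n d r : nat).
Variables (ray : 'I_d -> 'I_n -> int) (Sigma : {set {set 'I_d}}) (part : 'I_d -> 'I_r).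

Local Notation nu := (nu ray part).

Lemma nu_ll p k : nu (lshift r p) (lshift r k) = ray p k.
Proof. by rewrite /Defs.nu !splitl. Qed.
Lemma nu_lr p i : nu (lshift r p) (rshift n i) = (part p == i)%:Z.
Proof. by rewrite /Defs.nu splitl splitr. Qed.
Lemma nu_rl i k : nu (rshift d i) (lshift r k) = 0.
Proof. by rewrite /Defs.nu splitr splitl. Qed.
Lemma nu_rr i i' : nu (rshift d i) (rshift n i') = (i == i')%:Z.
Proof. by rewrite /Defs.nu !splitr. Qed.

Lemma sumJ (V : zmodType) (f : 'I_(d + r) -> V) :
  \sum_(j < d + r) f j = \sum_(p < d) f (lshift r p) + \sum_(i < r) f (rshift d i).
Proof. by rewrite big_split_ord. Qed.

Lemma sumK (V : zmodType) (f : 'I_(n + r) -> V) :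
  \sum_(j < n + r) f j = \sum_(p < n) f (lshift r p) + \sum_(i < r) f (rshift n i).
Proof. by rewrite big_split_ord. Qed.

Lemma in_Tmax (s : {set 'I_d}) p : (lshift r p \in Tmax_cell r s) = (p \in s).
Proof. by rewrite inE splitl. Qed.
Lemma in_Tmaxr (s : {set 'I_d}) i : (rshift d i \in Tmax_cell r s).
Proof. by rewrite inE splitr. Qed.

Definition Am (u : 'X_{1..d + r}) (kk : 'I_(n + r)) : int :=
  \sum_(j < d + r) (u j)%:Z * nu j kk.

Definition supp_in (u : 'X_{1..d + r}) (C : {set 'I_(d + r)}) :=
  forall j, (u j != 0)%N -> j \in C.

Hypothesis fanH : smooth_projective_fan R ray Sigma.

Lemma cell_ker (s : {set 'I_d}) (de : 'I_(d + r) -> int) :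
  s \in Sigma -> (forall j, j \notin Tmax_cell r s -> de j = 0) ->
  (forall kk, \sum_(j < d + r) de j * nu j kk = 0) -> forall j, de j = 0.
Proof.
move=> Hs Hsup Hker.
have [indep _] := (fanH.2.2.2.1 s Hs).
have Hl : forall p, de (lshift r p) = 0.
  move=> p.
  apply/eqP; rewrite -(intr_eq0 R); apply/eqP.
  apply: (indep (fun p => (de (lshift r p))%:~R)) => [q qs|].
    by rewrite Hsup ?in_Tmax.
  move=> k; have := Hker (lshift r k); rewrite sumJ.
  rewrite [X in _ + X]big1 ?addr0 => [H|i _]; last by rewrite nu_rl mulr0.
  rewrite (_ : \sum_(p0 < d) _ = (\sum_(p0 < d) de (lshift r p0) * nu (lshift r p0) (lshift r k))%:~R).
    by rewrite H.
  by rewrite intr_sumE; apply: eq_bigr => q _; rewrite nu_ll intrM.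
move=> j; case: (split_ordP j) => [p ->|i ->] //.
have := Hker (rshift n i); rewrite sumJ.
rewrite big1; last by move=> q _; rewrite Hl mul0r.
rewrite add0r (bigD1 i) //= nu_rr eqxx mulr1 big1 ?addr0 //.
by move=> i' /negbTE ne; rewrite nu_rr ne mulr0.
Qed.


Lemma in_max_cone (s : {set 'I_d}) : s \in Sigma -> exists2 t, max_cone Sigma t & s \subset t.
Proof.
move=> Hs.
pose S := [pred t : {set 'I_d} | (t \in Sigma) && (s \subset t)].
have S0 : S s by rewrite /S /= Hs subxx.
case: (@arg_maxnP _ s S (fun t => #|t|) S0) => t /andP[tS st] Hmax.
exists t => //; split => // t' t'S tt'.
apply/eqP; rewrite eq_sym eqEcard tt' /=.
by apply: Hmax; rewrite /S /= t'S (subset_trans st tt').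
Qed.

Variable w : 'I_(d + r) -> R.
Hypothesis TwH : Tw_eq_Tmax ray Sigma part w.

Definition wt (u : 'X_{1..d + r}) : R := \sum_(j < d + r) w j * (u j)%:R.

Lemma natz_intr (m : nat) : (m%:Z)%:~R = m%:R :> R.
Proof. by rewrite -pmulrn. Qed.

Lemma key (s : {set 'I_d}) (u v : 'X_{1..d + r}) :
  max_cone Sigma s -> supp_in u (Tmax_cell r s) -> (forall kk, Am u kk = Am v kk) ->
  wt u <= wt v /\ (wt v <= wt u -> v = u).
Proof.
move=> Hs Hu Huv.
have [[psi [Hle Hiff]] _] := (TwH (Tmax_cell r s)).2 (ex_intro2 _ _ s Hs erefl).
pose pn j := \sum_(kk < n + r) psi kk * (nu j kk)%:~R.
have Hpn : forall m : 'X_{1..d + r},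
    \sum_(j < d + r) pn j * (m j)%:R = \sum_(kk < n + r) psi kk * (Am m kk)%:~R.
  move=> m; rewrite /pn /Am.
  under eq_bigr do rewrite mulr_suml.
  rewrite exchange_big /=; apply: eq_bigr => kk _.
  rewrite intr_sumE mulr_sumr; apply: eq_bigr => j _.
  rewrite intrM natz_intr; ring.
have Hdiff : forall m : 'X_{1..d + r},
    wt m - \sum_(kk < n + r) psi kk * (Am m kk)%:~R =
    \sum_(j < d + r) (w j - pn j) * (m j)%:R.
  by move=> m; rewrite -Hpn /wt -sumrB; apply: eq_bigr => j _; rewrite mulrBl.
have Hge : forall m : 'X_{1..d + r}, forall j, 0 <= (w j - pn j) * (m j)%:R.
  by move=> m j; rewrite mulr_ge0 ?ler0n // subr_ge0 Hle.
have Hu0 : wt u = \sum_(kk < n + r) psi kk * (Am u kk)%:~R.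
  apply/eqP; rewrite -subr_eq0 Hdiff; apply/eqP/big1 => j _.
  case: (eqVneq (u j) 0%N) => [->|/Hu /Hiff e]; first by rewrite mulr0.
  by rewrite /pn e subrr mul0r.
have Hv : \sum_(kk < n + r) psi kk * (Am u kk)%:~R <= wt v.
  rewrite -subr_ge0 (eq_bigr (fun kk => psi kk * (Am v kk)%:~R)); last first.
    by move=> kk _; rewrite Huv.
  by rewrite Hdiff sumr_ge0.
split; first by rewrite Hu0.
move=> Hvu.
have H0 : \sum_(j < d + r) (w j - pn j) * (v j)%:R = 0.
  apply/eqP; rewrite eq_le sumr_ge0 // andbT -Hdiff subr_le0.
  rewrite (le_trans Hvu) // Hu0 le_eqVlt; apply/orP; left; apply/eqP.
  by apply: eq_bigr => kk _; rewrite Huv.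
have Hvs : supp_in v (Tmax_cell r s).
  move=> j vj; apply/Hiff/eqP; rewrite eq_sym -subr_eq0.
  have := @psumr_eq0P R _ predT (fun j => (w j - pn j) * (v j)%:R) (fun j _ => Hge v j) H0 j isT.
  by move/eqP; rewrite mulf_eq0 pnatr_eq0 (negbTE vj) orbF.
have := @cell_ker s (fun j => (u j)%:Z - (v j)%:Z) Hs.1 _ _.
move=> Hc; apply/mnmP => j; apply/eqP; rewrite eq_sym -(eqz_nat) -subr_eq0.
apply/eqP/Hc.
- move=> j' nj'.
  have -> : u j' = 0%N by apply/eqP; apply: contraR nj' => /Hu.
  have -> : v j' = 0%N by apply/eqP; apply: contraR nj' => /Hvs.
  by [].
- move=> kk; have := Huv kk; rewrite /Am => e.
  under eq_bigr do rewrite mulrBl.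
  by rewrite sumrB e subrr.
Qed.

Lemma posp_ge0 z : (0 <= z)%R -> (posp z)%:Z = z.
Proof. by case: z. Qed.
Lemma posp_le0 z : (z <= 0)%R -> posp z = 0%N.
Proof.
move=> zle; rewrite /posp; case: ifP => // z0.
by have -> : z = 0 by apply/eqP; rewrite eq_le zle z0.
Qed.
Lemma posp_negp z : (posp z)%:Z - (negp z)%:Z = z.
Proof.
rewrite /negp; case: (lerP 0 z) => z0.
  by rewrite posp_ge0 // posp_le0 ?oppr_le0 // subr0.
by rewrite posp_le0 ?ltW // posp_ge0 ?oppr_ge0 ?ltW // sub0r opprK.
Qed.

Lemma mposE k (l : 'I_k -> int) j : mpos l j = posp (l j).
Proof. by rewrite /mpos mnmE. Qed.
Lemma mnegE k (l : 'I_k -> int) j : mneg l j = negp (l j).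
Proof. by rewrite /mneg mnmE. Qed.

Lemma Lext_fib (l : 'I_(d + r) -> int) : Lext ray part l ->
  forall kk, Am (mpos l) kk = Am (mneg l) kk.
Proof.
move=> Hl kk; apply/eqP; rewrite -subr_eq0 /Am -sumrB; apply/eqP.
rewrite -[RHS](Hl kk); apply: eq_bigr => j _.
by rewrite mposE mnegE -mulrBl posp_negp.
Qed.

Lemma extl (l : 'I_d -> int) p : ext part l (lshift r p) = l p.
Proof. by rewrite /ext splitl. Qed.
Lemma extr (l : 'I_d -> int) i : ext part l (rshift d i) = - \sum_(p < d | part p == i) l p.
Proof. by rewrite /ext splitr. Qed.

Definition prel (P s : {set 'I_d}) (c : 'I_d -> int) (p : 'I_d) : int :=
  (p \in P)%:Z - (if p \in s then c p else 0).

Lemma prel_ray (P s : {set 'I_d}) (c : 'I_d -> int) k :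
  (\sum_(p in P) ray p k = \sum_(p in s) c p * ray p k) ->
  \sum_(p < d) prel P s c p * ray p k = 0.
Proof.
move=> H; rewrite /prel.
under eq_bigr do rewrite mulrBl.
rewrite sumrB; apply/eqP; rewrite subr_eq0; apply/eqP.
rewrite (big_mkcond (fun p => p \in P)) (big_mkcond (fun p => p \in s)) in H.
rewrite (eq_bigr (fun p => if p \in P then ray p k else 0)); last first.
  by move=> p _; case: (p \in P); rewrite ?mul1r ?mul0r.
rewrite H; apply: eq_bigr => p _; by case: (p \in s); rewrite ?mul0r.
Qed.

Lemma prim_rel_data (P : {set 'I_d}) l : prim_rel ray Sigma P l ->
  exists2 s, s \in Sigma & exists c : 'I_d -> int,
    [/\ forall p, p \in s -> 0 < c p,
        forall k, \sum_(p < d) l p * ray p k = 0 & forall p, l p = prel P s c p].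
Proof.
case=> s Hs [c [Hc [Hsum Hl]]]; exists s => //; exists c.
split => // k; rewrite -[RHS](prel_ray (Hsum k)); apply: eq_bigr => p _; by rewrite Hl.
Qed.

Lemma prim_Lext (P : {set 'I_d}) l : prim_rel ray Sigma P l -> Lext ray part (ext part l).
Proof.
case/prim_rel_data => s Hs [c [Hc Hk el]] kk; rewrite sumJ.
case: (split_ordP kk) => [k ->|i ->].
  rewrite [X in _ + X]big1 ?addr0 => [|i _]; last by rewrite nu_rl mulr0.
  by rewrite -[RHS](Hk k); apply: eq_bigr => p _; rewrite extl nu_ll.
rewrite (bigD1 i) //= extr nu_rr eqxx mulr1.
rewrite [X in _ + (_ + X)]big1 ?addr0 => [|i' /negbTE ne]; last by rewrite nu_rr ne mulr0.
apply/eqP; rewrite subr_eq0; apply/eqP; rewrite [RHS]big_mkcond /=; apply: eq_bigr => p _.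
by rewrite extl nu_lr; case: (part p == i); rewrite ?mulr1 ?mulr0.
Qed.

Hypothesis nefH : nef_partition ray Sigma part.

Lemma nef_ge0 (P : {set 'I_d}) l : prim_rel ray Sigma P l ->
  forall i, 0 <= \sum_(p < d | part p == i) l p.
Proof.
case/prim_rel_data => s Hs [c [Hc Hk el]] i.
case: (in_max_cone Hs) => t tmax st.
have [m Hm] := (nefH i).2 t tmax.
have H0 : \sum_(p < d) l p * pairing m (ray p) = 0.
  rewrite /pairing; under eq_bigr do rewrite mulr_sumr.
  rewrite exchange_big /=; apply: big1 => k _.
  under eq_bigr do rewrite mulrCA.
  by rewrite -mulr_sumr Hk mulr0.
have Hle : \sum_(p < d) l p * (- (part p == i)%:Z) <= \sum_(p < d) l p * pairing m (ray p).
  apply: ler_sum => p _; case: (boolP (p \in t)) => pt; first by rewrite (Hm p).1.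
  have lp0 : 0 <= l p.
    rewrite el /prel; have -> : (p \in s) = false by apply: contraNF pt; apply: (subsetP st).
    by rewrite subr0; case: (p \in P).
  by rewrite ler_wpM2l // (Hm p).2.
move: Hle; rewrite H0; under eq_bigr do rewrite mulrN.
rewrite sumrN oppr_le0 [X in _ -> _ <= X]big_mkcond /=.
congr (_ <= _); apply: eq_bigr => p _; by case: (part p == i); rewrite ?mulr1 ?mulr0.
Qed.

Lemma exists_prim_rel (P : {set 'I_d}) : exists l, prim_rel ray Sigma P l.
Proof.
have [s Hs [a [a0 [aoff ax]]]] := fanH.2.2.2.2.1 (fun k => \sum_(p in P) (ray p k)%:~R).
have [_ integ] := fanH.2.2.2.1 s Hs.
have [c Hc] : exists c : 'I_d -> int, forall p, a p = (c p)%:~R.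
  apply: (@fin_all_exists _ (fun _ => int) (fun p z => a p = z%:~R)).
  apply: integ => // k.
  by exists (\sum_(p in P) ray p k); rewrite -ax intr_sumE.
have c0 : forall p, 0 <= c p by move=> p; rewrite -(ler0z R) -Hc.
pose s' := [set p in s | 0 < c p].
have coff : forall p, p \notin s' -> c p = 0.
  move=> p; rewrite inE negb_and => /orP[/aoff|].
    by rewrite Hc => /eqP; rewrite intr_eq0 => /eqP.
  by rewrite -leNgt => cp; apply/eqP; rewrite eq_le cp c0.
exists (prel P s' c); exists s'.
  by apply: (fanH.2.1 s) => //; apply/subsetP => p; rewrite inE => /andP[].
exists c; split; first by move=> p; rewrite inE => /andP[].
split => // k; apply: (@intr_inj R).
transitivity (\sum_(p < d) a p * (ray p k)%:~R); first by rewrite intr_sumE; exact: ax k.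
rewrite intr_sumE [RHS]big_mkcond /=; apply: eq_bigr => p _; case: ifP => ps'; first by rewrite intrM Hc.
by rewrite Hc coff ?ps' // mul0r.
Qed.

Lemma min_nonface (Q : {set 'I_d}) : Q \notin Sigma -> exists2 P, prim_coll Sigma P & P \subset Q.
Proof.
move=> HQ; pose S := [pred P : {set 'I_d} | (P \subset Q) && (P \notin Sigma)].
have SQ : S Q by rewrite /S /= subxx HQ.
case: (@arg_minnP _ Q S (fun P => #|P|) SQ) => P /andP[PQ PS] Hmin.
exists P => //; split => // Q' HQ'.
apply/negPn/negP => nQ'.
have := Hmin Q'; rewrite /S /= nQ' andbT (subset_trans (proper_sub HQ') PQ) => /(_ isT).
by rewrite leqNgt proper_card.
Qed.

Lemma prim_strict (P : {set 'I_d}) l : prim_coll Sigma P -> prim_rel ray Sigma P l ->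
  wt (mneg (ext part l)) < wt (mpos (ext part l)).
Proof.
move=> [PnS _] Hpr; have HL := prim_Lext Hpr.
case/prim_rel_data: Hpr => s Hs [c [Hc Hk el]].
case: (in_max_cone Hs) => t tmax st.
have Hsupp : supp_in (mneg (ext part l)) (Tmax_cell r t).
  move=> j; case: (split_ordP j) => [p ->|i ->]; last by rewrite in_Tmaxr.
  rewrite mnegE extl in_Tmax el /prel /negp => H; apply: (subsetP st).
  apply/negPn/negP => ps; move: H; rewrite (negbTE ps) subr0.
  by case: (p \in P).
have [le1 le2] := key tmax Hsupp (fun kk => esym (Lext_fib HL kk)).
rewrite lt_neqAle le1 andbT; apply/negP => /eqP e.
have me : mpos (ext part l) = mneg (ext part l) by apply: le2; rewrite e.
have l0 : forall p, l p = 0.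
  move=> p; have := posp_negp (ext part l (lshift r p)).
  by rewrite -(mposE (ext part l)) -(mnegE (ext part l)) me subrr extl.
move: PnS; suff -> : P = s by rewrite Hs.
apply/setP => p; have := l0 p; rewrite el /prel.
case: (boolP (p \in s)) => ps; case: (p \in P) => //=.
by move/eqP; rewrite sub0r oppr_eq0 => /eqP cp; have := Hc p ps; rewrite cp ltxx.
Qed.

Lemma prim_le (P : {set 'I_d}) l (u : 'X_{1..d + r}) : prim_rel ray Sigma P l ->
  (forall p, p \in P -> u (lshift r p) != 0%N) -> forall j, (mpos (ext part l) j <= u j)%N.
Proof.
move=> Hpr HP j; have Hnef := nef_ge0 Hpr.
case/prim_rel_data: Hpr => s Hs [c [Hc Hk el]].
case: (split_ordP j) => [p ->|i ->]; rewrite mposE; last first.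
  by rewrite extr posp_le0 // oppr_le0 Hnef.
rewrite extl el /prel; case: (boolP (p \in P)) => pP; last first.
  rewrite posp_le0 // sub0r oppr_le0; case: ifP => // ps.
  exact: ltW (Hc p ps).
case: (boolP (p \in s)) => ps; last by rewrite subr0 /posp /= lt0n HP.
by rewrite posp_le0 // subr_le0; have := Hc p ps.
Qed.

Definition stdm (u : 'X_{1..d + r}) := exists2 s, max_cone Sigma s & supp_in u (Tmax_cell r s).

Lemma nonstd_red (u : 'X_{1..d + r}) : ~ stdm u -> exists P l,
  [/\ prim_coll Sigma P, prim_rel ray Sigma P l & forall j, (mpos (ext part l) j <= u j)%N].
Proof.
move=> Hns; pose Q := [set p | u (lshift r p) != 0%N].
have HQ : Q \notin Sigma.
  apply/negP => /in_max_cone [t tmax Qt]; apply: Hns; exists t => // j.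
  case: (split_ordP j) => [p ->|i ->]; last by rewrite in_Tmaxr.
  by move=> up; rewrite in_Tmax (subsetP Qt) // inE.
have [P HP PQ] := min_nonface HQ.
have [l Hl] := exists_prim_rel P.
exists P, l; split => //; apply: prim_le Hl _ => p pP.
by have := subsetP PQ p pP; rewrite inE.
Qed.

Definition Mb : int := \sum_(p < d) \sum_(k < n) `|ray p k|.
Definition isl (kk : 'I_(n + r)) : int := (kk < n)%N%:Z.
Definition nu' (j : 'I_(d + r)) : 'X_{1..n + r} :=
  [multinom absz (nu j kk + Mb * isl kk)%R | kk < n + r].

Lemma Mb_ge p k : `|ray p k| <= Mb.
Proof.
rewrite /Mb (bigD1 p) //= (bigD1 k) //= -addrA lerDl.
rewrite addr_ge0 //; apply: sumr_ge0 => *; rewrite ?normr_ge0 //.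
by apply: sumr_ge0 => *; rewrite normr_ge0.
Qed.

Lemma nu'_ge0 j kk : 0 <= nu j kk + Mb * isl kk.
Proof.
case: (split_ordP j) => [p ->|i ->]; case: (split_ordP kk) => [k ->|i' ->].
- rewrite nu_ll /isl /= ltn_ord mulr1 -lerBlDr sub0r.
  rewrite lerNl; apply: le_trans (Mb_ge p k); rewrite -normrN; exact: ler_norm.
- by rewrite nu_lr /isl /= ltnNge leq_addr mulr0 addr0.
- rewrite nu_rl /isl /= ltn_ord mulr1 add0r.
  by rewrite /Mb; apply: sumr_ge0 => p _; apply: sumr_ge0 => k' _; exact: normr_ge0.
- by rewrite nu_rr /isl /= ltnNge leq_addr mulr0 addr0.
Qed.

Lemma nu'E j kk : (nu' j kk)%:Z = nu j kk + Mb * isl kk.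
Proof. by rewrite /nu' mnmE abszE ger0_norm // nu'_ge0. Qed.

Definition keym (m : 'X_{1..d + r}) : 'X_{1..n + r} :=
  [multinom (\sum_(j < d + r) m j * nu' j kk)%N | kk < n + r].

Lemma keymE m kk : (keym m kk)%:Z = Am m kk + Mb * isl kk * (mdeg m)%:Z.
Proof.
rewrite /keym mnmE natz_sum mdegE natz_sum mulr_sumr /Am -big_split /=.
apply: eq_bigr => j _; rewrite PoszM nu'E; ring.
Qed.

Lemma sum_nu_r j : \sum_(i < r) nu j (rshift n i) = 1.
Proof.
case: (split_ordP j) => [p ->|i0 ->].
  rewrite (bigD1 (part p)) //= nu_lr eqxx big1 ?addr0 // => i ne.
  by rewrite nu_lr eq_sym (negbTE ne).
rewrite (bigD1 i0) //= nu_rr eqxx big1 ?addr0 // => i ne.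
by rewrite nu_rr eq_sym (negbTE ne).
Qed.

Lemma Am_deg m : (mdeg m)%:Z = \sum_(i < r) Am m (rshift n i).
Proof.
rewrite /Am exchange_big mdegE natz_sum /=; apply: eq_bigr => j _.
by rewrite -mulr_sumr sum_nu_r mulr1.
Qed.

Lemma isl_r i : isl (rshift n i) = 0.
Proof. by rewrite /isl /= ltnNge leq_addr. Qed.

Lemma keym_fib u v : keym u = keym v <-> (forall kk, Am u kk = Am v kk).
Proof.
have degE : (forall i, Am u (rshift n i) = Am v (rshift n i)) -> mdeg u = mdeg v.
  move=> H; apply/eqP; rewrite -eqz_nat !Am_deg; apply/eqP.
  by apply: eq_bigr => i _; rewrite H.
split => [e|H].
  have Hr : forall i, Am u (rshift n i) = Am v (rshift n i).
    move=> i; have := keymE u (rshift n i); rewrite e keymE isl_r !mulr0 mul0r !addr0.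
    by move->.
  move=> kk; have := keymE u kk; rewrite e keymE (degE Hr) => /addIr.
  by [].
apply/mnmP => kk; apply/eqP; rewrite -eqz_nat !keymE H (degE (fun i => H _)).
by [].
Qed.

Lemma keymD a b : keym (a + b)%MM = (keym a + keym b)%MM.
Proof.
apply/mnmP => kk; rewrite mnmDE /keym !mnmE -big_split /=.
by apply: eq_bigr => j _; rewrite mnmDE mulnDl.
Qed.

Definition phi : {mpoly F[d + r]} -> {mpoly F[n + r]} :=
  mmap (@mpolyC (n + r) F) (fun j => 'X_[nu' j]).

Lemma phiM x y : phi (x * y) = phi x * phi y.
Proof. exact: (mmap_is_multiplicative _ (@mpolyC (n + r) F)).1. Qed.

Lemma mmap1_key m : mmap1 (fun j => 'X_[nu' j]) m = 'X_[keym m] :> {mpoly F[n + r]}.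
Proof.
rewrite /mmap1 mprodXnE; congr mpolyX; apply/mnmP => kk.
rewrite mnm_sumE /keym mnmE; apply: eq_bigr => j _; by rewrite mulmnE mulnC.
Qed.

Lemma phiX m : phi 'X_[m] = 'X_[keym m].
Proof. by rewrite /phi mmapX mmap1_key. Qed.

Lemma phi_sum (s : seq ({mpoly F[d + r]} * {mpoly F[d + r]})) (G : _ -> {mpoly F[d + r]}) :
  phi (\sum_(x <- s) G x) = \sum_(x <- s) phi (G x).
Proof. by apply: (big_morph _ (@mmapD _ _ _ _ _)); rewrite /phi mmap0. Qed.

Lemma phi_I h : toric_ideal F ray part h -> phi h = 0.
Proof.
move=> [s [Hs ->]]; rewrite phi_sum big_seq big1 // => x xs.
have [l [Hl ->]] := Hs x xs.
rewrite phiM /binom /phi mmapB -!/phi !phiX.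
by rewrite (proj2 (keym_fib _ _) (Lext_fib Hl)) subrr mulr0.
Qed.

Lemma phi_coeff h c : (phi h)@_c = \sum_(m <- msupp h | keym m == c) h@_m.
Proof.
rewrite /phi /mmap (big_morph _ (mcoeffD c) (mcoeff0 _ c)) [RHS]big_mkcond /=.
apply: eq_bigr => m _; rewrite mmap1_key mcoeffCM mcoeffX.
by case: (keym m == c); rewrite ?mulr1 ?mulr0.
Qed.

Lemma std_not_max h m0 : toric_ideal F ray part h -> m0 \in msupp h ->
  (forall m, m \in msupp h -> wt m <= wt m0) -> ~ stdm m0.
Proof.
move=> Hh Hm0 Hmax [s smax Hs].
have := phi_coeff h (keym m0); rewrite phi_I // mcoeff0.
rewrite big_mkcond (bigD1_seq m0) ?msupp_uniq //= eqxx big1_seq.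
  by rewrite addr0 => /esym/eqP; rewrite mcoeff_eq0 Hm0.
move=> m /andP[nm Hm]; case: eqP => // ke.
have [_ le2] := key smax Hs (proj1 (keym_fib _ _) (esym ke)).
by move: nm; rewrite (le2 (Hmax m Hm)) eqxx.
Qed.

Lemma indep_eq (t : {set 'I_d}) (a b : 'I_d -> R) : t \in Sigma ->
  (forall p, p \notin t -> a p = 0) -> (forall p, p \notin t -> b p = 0) ->
  (forall k, \sum_(p < d) a p * (ray p k)%:~R = \sum_(p < d) b p * (ray p k)%:~R) ->
  forall p, a p = b p.
Proof.
move=> Ht Ha Hb Hab p; have [indep _] := fanH.2.2.2.1 t Ht.
apply/eqP; rewrite -subr_eq0; apply/eqP.
apply: (indep (fun p => a p - b p)) => [q qt|k].
  by rewrite Ha ?Hb ?subr0.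
by under eq_bigr do rewrite mulrBl; rewrite sumrB Hab subrr.
Qed.

Lemma cone_of (t : {set 'I_d}) (c : 'I_d -> int) k :
  \sum_(p < d) (if p \in t then c p else 0)%:~R * (ray p k)%:~R = (\sum_(p in t) c p * ray p k)%:~R :> R.
Proof.
rewrite intr_sumE [RHS]big_mkcond /=; apply: eq_bigr => p _.
by case: ifP => _; rewrite ?intrM // mul0r.
Qed.

Lemma prim_unique (P : {set 'I_d}) l1 l2 :
  prim_rel ray Sigma P l1 -> prim_rel ray Sigma P l2 -> forall p, l1 p = l2 p.
Proof.
move=> [s1 Hs1 [c1 [Hc1 [Hk1 el1]]]] [s2 Hs2 [c2 [Hc2 [Hk2 el2]]]].
pose x k : R := (\sum_(p in P) ray p k)%:~R.
pose a1 p : R := (if p \in s1 then c1 p else 0)%:~R.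
pose a2 p : R := (if p \in s2 then c2 p else 0)%:~R.
have cone1 : in_cone ray s1 x.
  exists a1; split; first by move=> p; rewrite /a1; case: ifP => // ps; rewrite ler0z ltW ?Hc1.
  split; first by move=> p /negbTE ps; rewrite /a1 ps.
  by move=> k; rewrite /x Hk1 cone_of.
have cone2 : in_cone ray s2 x.
  exists a2; split; first by move=> p; rewrite /a2; case: ifP => // ps; rewrite ler0z ltW ?Hc2.
  split; first by move=> p /negbTE ps; rewrite /a2 ps.
  by move=> k; rewrite /x Hk2 cone_of.
have [b [b0 [boff bx]]] := fanH.2.2.1 s1 s2 Hs1 Hs2 x cone1 cone2.
have e1 : forall p, a1 p = b p.
  apply: (indep_eq Hs1) => [p /negbTE ps|p ps|k]; first by rewrite /a1 ps.
    by rewrite boff // inE negb_and ps.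
  by rewrite cone_of -Hk1 -bx.
have e2 : forall p, a2 p = b p.
  apply: (indep_eq Hs2) => [p /negbTE ps|p ps|k]; first by rewrite /a2 ps.
    by rewrite boff // inE negb_and ps orbT.
  by rewrite cone_of -Hk2 -bx.
move=> p; rewrite el1 el2; congr (_ - _); apply: (@intr_inj R).
by have := e1 p; rewrite -e2.
Qed.

Lemma batyrev (P : {set 'I_d}) l : prim_coll Sigma P -> prim_rel ray Sigma P l ->
  exists2 s, s \in Sigma & exists c : 'I_d -> int,
    [/\ forall p, p \in s -> 0 < c p, forall p, l p = prel P s c p & forall p, p \in P -> p \notin s].
Proof.
move=> [PnS Pmin] [s Hs [c [Hc [Hk el]]]]; exists s => //; exists c; split => //.
move=> p0 p0P; apply/negP => p0s.
pose Q := P :\ p0.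
have QS : Q \in Sigma.
  apply: Pmin; rewrite properEneq subD1set andbT; apply/negP => /eqP QP.
  by move: p0P; rewrite -QP !inE eqxx.
pose y k : R := (\sum_(p in Q) ray p k)%:~R.
pose aQ p : R := (p \in Q)%:R.
pose a' p : R := (if p \in s then c p else 0)%:~R - (p == p0)%:R.
have hQ : forall k, y k = \sum_(p < d) aQ p * (ray p k)%:~R.
  move=> k; rewrite /y intr_sumE [LHS]big_mkcond /=; apply: eq_bigr => p _.
  by rewrite /aQ; case: (p \in Q); rewrite ?mul1r ?mul0r.
have coneQ : in_cone ray Q y.
  exists aQ; split; first by move=> p; rewrite /aQ ler0n.
  by split; first by move=> p /negbTE pQ; rewrite /aQ pQ.
have cones : in_cone ray s y.
  exists a'; split.
    move=> p; rewrite /a'; case: (eqVneq p p0) => [->|ne].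
      by rewrite p0s subr_ge0 -(natz_intr 1) ler_int; have := Hc p0 p0s.
    by rewrite subr0; case: ifP => // ps; rewrite ler0z ltW ?Hc.
  split.
    move=> p ps; rewrite /a' (negbTE ps); case: (eqVneq p p0) => [e|_]; last by rewrite subr0.
    by move: ps; rewrite e p0s.
  move=> k; rewrite /y /a'; apply/esym.
  under eq_bigr do rewrite mulrBl.
  rewrite sumrB cone_of -Hk (bigD1 p0) //= intrD.
  have z : \sum_(i < d | i != p0) (i == p0)%:R * (ray i k)%:~R = 0 :> R.
    by apply: big1 => i /negbTE ->; rewrite mul0r.
  rewrite [X in _ - X](bigD1 p0) //= eqxx mul1r z addr0.
  rewrite addrAC subrr add0r; congr (_%:~R); apply: eq_bigl => p.
  by rewrite !inE andbC.
have [b [b0 [boff bx]]] := fanH.2.2.1 Q s QS Hs y coneQ cones.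
have eb : forall p, aQ p = b p.
  apply: (indep_eq QS) => [p /negbTE pQ|p pQ|k]; first by rewrite /aQ pQ.
    by rewrite boff // inE negb_and pQ.
  by rewrite -bx hQ.
move: PnS; apply/negP/negPn; apply: (fanH.2.1 s) => //.
apply/subsetP => p pP; case: (eqVneq p p0) => [->//|ne].
have pQ : p \in Q by rewrite !inE ne pP.
apply/negPn/negP => ps; have := eb p; rewrite boff ?inE ?negb_and ?ps ?orbT //.
by rewrite /aQ pQ => /eqP; rewrite oner_eq0.
Qed.

Lemma wtD a b : wt (a + b)%MM = wt a + wt b.
Proof. by rewrite /wt -big_split; apply: eq_bigr => j _; rewrite mnmDE natrD mulrDr. Qed.

Local Notation Gs := (prim_binomials F ray Sigma part).

Lemma red_step u : ~ stdm u -> exists u',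
  [/\ keym u' = keym u, wt u' < wt u & in_ideal Gs ('X_[u] - 'X_[u'])].
Proof.
move=> Hns; have [P [l [HP Hl Hle]]] := nonstd_red Hns.
set a := mpos (ext part l); set b := mneg (ext part l).
have ale : (a <= u)%MM by apply/mnm_lepP.
have kab : keym a = keym b by apply/keym_fib/Lext_fib/(prim_Lext Hl).
exists ((u - a) + b)%MM; split.
- by rewrite keymD -kab -keymD submK.
- rewrite -{2}(submK ale) !wtD ltrD2l; exact: prim_strict HP Hl.
- have -> : 'X_[u] - 'X_[(u - a + b)%MM] = 'X_[(u - a)%MM] * binom F (ext part l).
    by rewrite /binom mulrBr -!mpolyXD submK.
  by apply: idealM; apply: idealgen; exists P, l.
Qed.

Definition mu D (u : 'X_{1..d + r}) :=
  #|[set v : bmultinom (d + r) D.+1 | (keym v == keym u) && (wt v < wt u)]|.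

Lemma keym_deg u v : keym u = keym v -> mdeg u = mdeg v.
Proof.
move/keym_fib => H; apply/eqP; rewrite -eqz_nat !Am_deg; apply/eqP.
by apply: eq_bigr => i _; exact: H.
Qed.

Lemma NF u : exists v, [/\ stdm v, keym v = keym u & in_ideal Gs ('X_[u] - 'X_[v])].
Proof.
move: u; suff H : forall N u, (mu (mdeg u) u < N)%N ->
    exists v, [/\ stdm v, keym v = keym u & in_ideal Gs ('X_[u] - 'X_[v])].
  by move=> u; exact: (H (mu (mdeg u) u).+1).
elim=> // N IH u Hmu.
case: (classic (stdm u)) => Hs.
  by exists u; split => //; rewrite subrr; exact: ideal0.
have [u' [ku' wu' Hid]] := red_step Hs.
have du : mdeg u' = mdeg u by apply: keym_deg.
have lt : (mu (mdeg u) u' < mu (mdeg u) u)%N.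
  apply: proper_card; apply/properP; split.
    apply/subsetP => v; rewrite !inE => /andP[/eqP kv wv].
    by rewrite kv ku' eqxx /=; exact: lt_trans wv wu'.
  have bu' : (mdeg u' < (mdeg u).+1)%N by rewrite du ltnS.
  by exists (BMultinom bu'); rewrite !inE /= ?ku' ?eqxx //= ?wu' ?ltxx.
have [|v [vs kv Hv]] := IH u'.
  by rewrite du; apply: leq_trans lt _; rewrite -ltnS.
exists v; split => //; first by rewrite kv ku'.
have -> : 'X_[u] - 'X_[v] = ('X_[u] - 'X_[u']) + ('X_[u'] - 'X_[v]) :> {mpoly F[d + r]}.
  by rewrite addrA subrK.
exact: idealD.
Qed.

Lemma std_unique v1 v2 : stdm v1 -> stdm v2 -> keym v1 = keym v2 -> v1 = v2.
Proof.
move=> [s1 h1 H1] [s2 h2 H2] k12.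
have [_ l1'] := key h1 H1 (proj1 (keym_fib _ _) k12).
have [l2 _] := key h2 H2 (proj1 (keym_fib _ _) (esym k12)).
by apply/esym/l1'.
Qed.

Lemma part2 l : Lext ray part l -> in_ideal Gs (binom F l).
Proof.
move=> Hl; have [v1 [s1 k1 H1]] := NF (mpos l); have [v2 [s2 k2 H2]] := NF (mneg l).
have kk : keym (mpos l) = keym (mneg l) by apply/keym_fib/Lext_fib.
have e : v1 = v2 by apply: std_unique; rewrite // k1 k2.
rewrite -e in H2; rewrite /binom.
have -> : 'X_[mpos l] - 'X_[mneg l] = ('X_[mpos l] - 'X_[v1]) - ('X_[mneg l] - 'X_[v1]) :> {mpoly F[d + r]}.
  by rewrite opprB addrA subrK.
exact: idealB.
Qed.

Lemma init_in h : toric_ideal F ray part h ->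
  in_ideal (fun q => exists2 g, Gs g & q = init_form w g) (init_form w h).
Proof.
move=> Hh; rewrite [in X in in_ideal _ X]/init_form big_seq_cond; apply: ideal_sum => m /andP[Hm /allP Hall].
have Hns := std_not_max Hh Hm (fun m' H => Hall m' H).
have [P [l [HP Hl Hle]]] := nonstd_red Hns.
have ale : (mpos (ext part l) <= m)%MM by apply/mnm_lepP.
rewrite -(submK ale) mpolyXD; apply/idealZ/idealM/idealgen.
exists (binom F (ext part l)); first by exists P, l.
rewrite binom_init //; exact: prim_strict HP Hl.
Qed.

Lemma coefXdiv (q : {mpoly F[d + r]}) a b : ~~ (b <= a)%MM -> (q * 'X_[b])@_a = 0.
Proof.
move=> nba; rewrite {1}(mpolyE q) mulr_suml (big_morph _ (mcoeffD a) (mcoeff0 _ a)).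
apply: big1 => m _; rewrite -scalerAl -mpolyXD mcoeffZ mcoeffX.
case: eqP => [e|_]; last by rewrite mulr0.
exfalso; move/negP: nba; apply; rewrite -e; apply/mnm_lepP => j.
by rewrite mnmDE leq_addl.
Qed.

Lemma minimal g : Gs g ->
  ~ in_ideal (fun q => exists h, [/\ Gs h, h <> g & q = init_form w h]) (init_form w g).
Proof.
move=> [P [l [HP Hl ->]]] [s [Hs He]].
rewrite binom_init in He; last exact: prim_strict HP Hl.
have : ('X_[mpos (ext part l)] : {mpoly F[d + r]})@_(mpos (ext part l)) = 1.
  by rewrite mcoeffX eqxx.
rewrite He (big_morph _ (mcoeffD _) (mcoeff0 _ _)) => Hsum.
have : ~~ all (fun x => (x.1 * x.2)@_(mpos (ext part l)) == 0) s.
  apply/negP => /allP H0; move: Hsum; rewrite big_seq big1 => [/eqP|x xs].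
    by rewrite eq_sym oner_eq0.
  by apply/eqP/H0.
case/allPn => x xs nz.
have [h [[P' [l' [HP' Hl' eh]]] nhg ex2]] := Hs x xs.
rewrite ex2 eh binom_init in nz; last exact: prim_strict HP' Hl'.
have ba : (mpos (ext part l') <= mpos (ext part l))%MM.
  by apply: contraR nz => nba; rewrite coefXdiv.
apply: nhg; rewrite eh.
have P'P : P' \subset P.
  apply/subsetP => p pP'.
  have [s' Hs' [c' [Hc' el' disj']]] := batyrev HP' Hl'.
  move/mnm_lepP: ba => /(_ (lshift r p)).
  rewrite !mposE !extl el' /prel pP' (negbTE (disj' p pP')) subr0.
  case/prim_rel_data: Hl => s0 Hs0 [c0 [Hc0 _ el0]]; rewrite el0 /prel.
  case: (boolP (p \in P)) => // pnP; rewrite sub0r [X in (_ <= X)%N]posp_le0 //.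
  rewrite oppr_le0; case: ifP => // ps0; exact: ltW (Hc0 p ps0).
have eP : P' = P.
  apply/eqP; rewrite eqEproper P'P /=; apply/negP => pr.
  by have := HP.2 P' pr; rewrite (negbTE HP'.1).
rewrite eP in Hl'.
have e := prim_unique Hl Hl'.
have ee : forall j, ext part l' j = ext part l j.
  move=> j; rewrite /ext; case: (split j) => [p|i]; first by rewrite e.
  by congr (- _); apply: eq_bigr => p _; rewrite e.
rewrite /binom; congr ('X_[_] - 'X_[_]); apply/mnmP => j.
  by rewrite !mposE ee.
by rewrite !mnegE ee.
Qed.

Lemma main_sec :
  minimal_groebner w (toric_ideal F ray part) Gs /\
  (forall l, Lext ray part l -> in_ideal Gs (binom F l)).
Proof.
have GI : forall g, Gs g -> toric_ideal F ray part g.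
  move=> g [P [l [HP Hl ->]]]; apply: idealgen; exists (ext part l); split => //.
  exact: prim_Lext Hl.
split; last exact: part2.
split; last exact: minimal.
split => // f; split => Hf.
  by apply: (idealT Hf) => q [h Hh ->]; exact: init_in.
by apply: (idealS Hf) => q [g Hg ->]; exists g => //; exact: GI.
Qed.

End Main.

Theorem mainTheorem5 (R : realFieldType) (F : fieldType) (n d r : nat)
    (ray : 'I_d -> 'I_n -> int) (Sigma : {set {set 'I_d}}) (part : 'I_d -> 'I_r) :
  smooth_projective_fan R ray Sigma ->
  nef_partition ray Sigma part ->
  forall w : 'I_(d + r) -> R,
  Tw_eq_Tmax ray Sigma part w ->
  minimal_groebner w (toric_ideal F ray part) (prim_binomials F ray Sigma part) /\
  (forall l, Lext ray part l ->
     in_ideal (prim_binomials F ray Sigma part) (binom F l)).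
Proof. move=> fanH nefH w TwH; exact: (main_sec F fanH TwH nefH). Qed.
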